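(* Consider the problem described in the context and let $\mathbf{x}_0=(x_0,y_0)\notin\Omega_{\rm capture}$. Let $T_{\min}(\mathbf{x}_0)=\arg\min_{T>0} d_f^*(T,\mathbf{x}_0)$. Then $$T_{\min}(\mathbf{x}_0)=\begin{cases}x_0-\frac{\mu}{\sqrt{1-\mu^2}}y_0, & \text{if } x_0-\frac{\mu}{\sqrt{1-\mu^2}}y_0>0,\\ 0, & \text{otherwise},\end{cases}$$ and consequently $$d_f^*(T_{\min},\mathbf{x}_0)=\begin{cases}\mu x_0+\sqrt{1-\mu^2}\,y_0, & \text{if } T_{\min}(\mathbf{x}_0)>0,\\ \|\mathbf{x}_0\|, & \text{otherwise}.\end{cases}$$
   Context: Pursuer-fixed frame: the Evader's relative position $\mathbf{x}(t)=(x(t),y(t))\in\mathbb{R}^2$ evolves as $\dot x=\mu\cos\psi(t)-1$, $\dot y=\mu\sin\psi(t)$, $\mathbf{x}(0)=\mathbf{x}_0$, $\|\mathbf{x}_0\|>1$, $\mu\in(0,1)$, $\psi(t)$ the Evader's heading. The constraint is $\|\mathbf{x}(t)\|\ge1$ on $[0,T]$. For a final time $T$, $d_f^*(T,\mathbf{x}_0)$ denotes the maximal final distance $\|\mathbf{x}(T)\|$ achievable by the Evader subject to the constraint (its best response). For $T>0$, $\Omega(T)$ is the set of $\mathbf{x}_0$ with $(x_0-T)^2+y_0^2<(1-\mu T)^2$, $\mu x_0+\sqrt{1-\mu^2}y_0<1$ and $x_0>\mu$, and $\Omega_{\rm capture}=\bigcup_{T\ge0}\Omega(T)$ (the set of initial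 positions from which, for some final time, capture, i.e. entering $\|\mathbf{x}\|<1$, is unavoidable). The paper assumes $y\ge0$ throughout. *)

(* Defs.v *)
From Stdlib Require Import Reals Lra.
From Coquelicot Require Import Coquelicot.
Open Scope R_scope.

Definition norm2 (p : R * R) : R := sqrt (fst p ^ 2 + snd p ^ 2).

(* Trajectory of the Evader's relative position in the pursuer-fixed frame
   under heading psi:  x(t) = x0 + int_0^t (mu cos psi - 1, mu sin psi). *)
Definition traj (mu : R) (psi : R -> R) (x0 y0 t : R) : R * R :=
  (x0 - t + mu * RInt (fun s => cos (psi s)) 0 t,
   y0 + mu * RInt (fun s => sin (psi s)) 0 t).

Definition admissible (mu T : R) (psi : R -> R) (x0 y0 : R) : Prop :=
  ex_RInt (fun s => cos (psi s)) 0 T /\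
  ex_RInt (fun s => sin (psi s)) 0 T /\
  forall t, 0 <= t <= T -> 1 <= norm2 (traj mu psi x0 y0 t).

Definition dfstar (mu T x0 y0 : R) : Rbar :=
  Lub_Rbar (fun d => exists psi, admissible mu T psi x0 y0 /\
                                 d = norm2 (traj mu psi x0 y0 T)).

Definition Omega (mu T x0 y0 : R) : Prop :=
  (x0 - T) ^ 2 + y0 ^ 2 < (1 - mu * T) ^ 2 /\
  mu * x0 + sqrt (1 - mu ^ 2) * y0 < 1 /\
  x0 > mu.

Definition Omega_capture (mu x0 y0 : R) : Prop :=
  exists T, 0 <= T /\ Omega mu T x0 y0.

Definition Tmin (mu x0 y0 : R) : R :=
  let s := x0 - mu / sqrt (1 - mu ^ 2) * y0 in
  if Rlt_dec 0 s then s else 0.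

(* Main.v *)
Require Import Defs.
From Stdlib Require Import Reals Lra Psatz.
From Coquelicot Require Import Coquelicot.
Open Scope R_scope.

Lemma cs_le (a b c d : R) : c^2 + d^2 = 1 -> a*c + b*d <= sqrt (a^2 + b^2).
Proof.
  intro H.
  apply Rle_trans with (sqrt ((a*c+b*d)*(a*c+b*d))).
  - destruct (Rle_or_lt 0 (a*c+b*d)).
    + rewrite sqrt_square; lra.
    + pose proof (sqrt_pos ((a*c+b*d)*(a*c+b*d))); lra.
  - apply sqrt_le_1_alt.
    assert (E : (a^2+b^2) = (a^2+b^2)*(c^2+d^2)) by (rewrite H; ring).
    rewrite E.
    assert (I : (a^2+b^2)*(c^2+d^2) - (a*c+b*d)*(a*c+b*d) = (a*d-b*c)^2) by ring.
    pose proof (pow2_ge_0 (a*d-b*c)). lra.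
Qed.

Lemma sqrt_sq_le (X Y : R) : 0 <= Y -> X <= Y*Y -> sqrt X <= Y.
Proof. intros. rewrite <- (sqrt_square Y) by lra. apply sqrt_le_1_alt; lra. Qed.

Lemma traj_const mu c x0 y0 t :
  traj mu (fun _ => c) x0 y0 t = (x0 - t + mu*(t*cos c), y0 + mu*(t*sin c)).
Proof.
  unfold traj. rewrite !RInt_const. unfold scal; simpl; unfold mult; simpl.
  f_equal; f_equal; f_equal; ring.
Qed.

Lemma ub mu T psi x0 y0 : 0 <= mu -> 0 <= T -> admissible mu T psi x0 y0 ->
  norm2 (traj mu psi x0 y0 T) <= sqrt ((x0-T)^2 + y0^2) + mu*T.
Proof.
  intros Hm HT [Hc [Hs _]].
  unfold norm2, traj; cbn [fst snd].
  set (a := RInt (fun s => cos (psi s)) 0 T).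
  set (b := RInt (fun s => sin (psi s)) 0 T).
  set (L := sqrt (a^2+b^2)).
  assert (HL0 : 0 <= L) by apply sqrt_pos.
  assert (HL2 : L*L = a^2+b^2) by (apply sqrt_sqrt; pose proof (pow2_ge_0 a); pose proof (pow2_ge_0 b); lra).
  assert (Hint : a*a + b*b = RInt (fun s => a * cos (psi s) + b * sin (psi s)) 0 T).
  { rewrite (RInt_plus (fun s => a * cos (psi s)) (fun s => b * sin (psi s))).
    - rewrite (RInt_scal (fun s => cos (psi s))) by exact Hc.
      rewrite (RInt_scal (fun s => sin (psi s))) by exact Hs.
      reflexivity.
    - apply (ex_RInt_scal (fun s => cos (psi s))); exact Hc.
    - apply (ex_RInt_scal (fun s => sin (psi s))); exact Hs. }
  assert (Hle : a*a + b*b <= T * L).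
  { rewrite Hint.
    apply Rle_trans with (RInt (fun _ => L) 0 T).
    - apply RInt_le; auto.
      + apply (ex_RInt_plus (V:=R_NormedModule) (fun s => a * cos (psi s)) (fun s => b * sin (psi s))).
        * apply (ex_RInt_scal (fun s => cos (psi s))); exact Hc.
        * apply (ex_RInt_scal (fun s => sin (psi s))); exact Hs.
      + apply ex_RInt_const.
      + intros x _. apply cs_le. pose proof (sin2_cos2 (psi x)). unfold Rsqr in *. nra.
    - rewrite RInt_const. unfold scal; simpl; unfold mult; simpl. lra. }
  assert (HLL : L*L <= T*L) by (rewrite HL2; replace (a^2+b^2) with (a*a+b*b) by ring; exact Hle).
  assert (HLT : L <= T).
  { destruct (Rle_or_lt L T) as [h|h]; [exact h|]. assert (T*L < L*L) by (apply Rmult_lt_compat_r; lra). lra. }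
  set (P := sqrt ((x0-T)^2 + y0^2)).
  assert (HP0 : 0 <= P) by apply sqrt_pos.
  assert (HP2 : P*P = (x0-T)^2 + y0^2) by (apply sqrt_sqrt; pose proof (pow2_ge_0 (x0-T)); pose proof (pow2_ge_0 y0); lra).
  apply sqrt_sq_le. pose proof (Rmult_le_pos mu T Hm HT); lra.
  clear Hint.
  assert (Hcs : (x0-T)*a + y0*b <= P*L).
  { assert (((x0-T)*a + y0*b)^2 <= (P*L)^2).
    { replace ((P*L)^2) with ((P*P)*(L*L)) by ring. rewrite HP2, HL2.
      assert (I : ((x0 - T) ^ 2 + y0 ^ 2) * (a ^ 2 + b ^ 2) - ((x0-T)*a + y0*b)^2 = ((x0-T)*b - y0*a)^2) by ring.
      pose proof (pow2_ge_0 ((x0-T)*b - y0*a)). lra. }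
    destruct (Rle_or_lt ((x0-T)*a + y0*b) 0). nra.
    assert (0 <= P*L) by nra.
    destruct (Rle_or_lt ((x0-T)*a + y0*b) (P*L)) as [h|h]; [exact h|].
    assert ((P*L)*(P*L) < ((x0-T)*a + y0*b)*((x0-T)*a + y0*b)) by (apply Rmult_le_0_lt_compat; lra). nra. }
  assert (mu*L <= mu*T) by (apply Rmult_le_compat_l; lra).
  nra.
Qed.

Lemma norm2_ge (c d p q : R) : c^2 + d^2 = 1 -> c*p + d*q <= norm2 (p, q).
Proof. intro H. unfold norm2; cbn [fst snd]. replace (c*p+d*q) with (p*c+q*d) by ring. apply cs_le. exact H. Qed.

Lemma adm_const mu T c x0 y0 :
  (forall t, 0 <= t <= T -> 1 <= norm2 (traj mu (fun _ => c) x0 y0 t)) ->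
  admissible mu T (fun _ => c) x0 y0.
Proof. intro H. split; [apply ex_RInt_const|split; [apply ex_RInt_const|exact H]]. Qed.

Lemma dfstar_ge mu T psi x0 y0 : admissible mu T psi x0 y0 ->
  Rbar_le (norm2 (traj mu psi x0 y0 T)) (dfstar mu T x0 y0).
Proof.
  intro H. unfold dfstar. destruct (Lub_Rbar_correct (fun d => exists psi, admissible mu T psi x0 y0 /\
                                 d = norm2 (traj mu psi x0 y0 T))) as [Hub _].
  apply Hub. exists psi; auto.
Qed.

Theorem lemma7 (mu x0 y0 : R) (Hmu : 0 < mu < 1) (Hy0 : 0 <= y0)
  (Hx0 : 1 < norm2 (x0, y0)) (Hnc : ~ Omega_capture mu x0 y0) :
  (forall T, 0 <= T -> Rbar_le (dfstar mu (Tmin mu x0 y0) x0 y0) (dfstar mu T x0 y0)) /\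
  dfstar mu (Tmin mu x0 y0) x0 y0 =
    Finite (if Rlt_dec 0 (Tmin mu x0 y0)
            then mu * x0 + sqrt (1 - mu ^ 2) * y0
            else norm2 (x0, y0)).
Proof.
  set (k := sqrt (1 - mu^2)).
  assert (Hk2 : k*k = 1 - mu^2) by (apply sqrt_sqrt; nra).
  assert (Hk0 : 0 < k) by (apply sqrt_lt_R0; nra).
  assert (Hr2 : 1 < x0^2 + y0^2).
  { unfold norm2 in Hx0; cbn [fst snd] in Hx0.
    destruct (Rle_or_lt (x0^2+y0^2) 1) as [h|h]; auto.
    apply sqrt_le_1_alt in h. rewrite sqrt_1 in h. lra. }
  unfold Tmin. fold k.
  set (s := x0 - mu / k * y0).
  destruct (Rlt_dec 0 s) as [Hs|Hs].
  -
    destruct (Rlt_dec 0 s) as [_|]; [|contradiction].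
    set (V := mu * x0 + k * y0).
    assert (Hsk : x0 * k - mu * y0 > 0).
    { assert (0 < s * k) by (apply Rmult_lt_0_compat; lra).
      unfold s in H. replace ((x0 - mu / k * y0) * k) with (x0*k - mu*y0) in H by (field; lra). lra. }
    assert (HV : 1 <= V).
    { destruct (Rle_or_lt 1 V) as [h|h]; auto. exfalso. apply Hnc.
      assert (Hxm : x0 > mu).
      { destruct (Rle_or_lt x0 mu) as [h2|h2]; auto. exfalso.
        assert (0 < x0) by nra.
        assert (y0 > k) by nra. nra. }
      exists ((x0 - mu)/(1-mu^2)). split.
      { apply Rmult_le_pos. lra. left; apply Rinv_0_lt_compat; nra. }
      unfold Omega. fold k. split; [|split; [exact h|exact Hxm]].
      assert (Hg : (1-mu^2) * (((x0 - (x0 - mu) / (1 - mu ^ 2)) ^ 2 + y0 ^ 2) - (1 - mu * ((x0 - mu) / (1 - mu ^ 2))) ^ 2)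
                   = (1-mu^2)*y0^2 - (1 - mu*x0)^2) by (field; nra).
      assert (h3 : (1-mu^2)*y0^2 < (1 - mu*x0)^2).
      { rewrite <- Hk2. unfold V in h.
        assert (0 <= k*y0) by (apply Rmult_le_pos; lra).
        assert ((k*y0)*(k*y0) < (1-mu*x0)*(1-mu*x0)) by (apply Rmult_le_0_lt_compat; lra).
        replace (k*k*y0^2) with ((k*y0)*(k*y0)) by ring. replace ((1-mu*x0)^2) with ((1-mu*x0)*(1-mu*x0)) by ring. lra. }
      assert (Hm2 : 0 < 1 - mu^2) by nra.
      assert (Hlt : (1-mu^2) * (((x0 - (x0 - mu) / (1 - mu ^ 2)) ^ 2 + y0 ^ 2) - (1 - mu * ((x0 - mu) / (1 - mu ^ 2))) ^ 2) < 0) by lra.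
      destruct (Rle_or_lt 0 (((x0 - (x0 - mu) / (1 - mu ^ 2)) ^ 2 + y0 ^ 2) - (1 - mu * ((x0 - mu) / (1 - mu ^ 2))) ^ 2)) as [h4|h4].
      - pose proof (Rmult_le_pos _ _ (Rlt_le _ _ Hm2) h4). lra.
      - lra. }
    set (w := acos mu).
    assert (Hcw : cos w = mu) by (apply cos_acos; lra).
    assert (Hsw : sin w = k) by (unfold w; rewrite sin_acos by lra; unfold k, Rsqr; f_equal; ring).
    assert (Hgen : forall T, 0 <= T -> V <= norm2 (traj mu (fun _ => w) x0 y0 T)).
    { intros T HT. rewrite traj_const, Hcw, Hsw.
      eapply Rle_trans; [|apply (norm2_ge mu k)]. unfold V.
      replace (mu * (x0 - T + mu * (T * mu)) + k * (y0 + mu * (T * k))) with (mu*x0 + k*y0 + mu*T*(k*k - (1-mu^2))) by ring.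
      rewrite Hk2. lra.
      replace (k^2) with (k*k) by ring; rewrite Hk2; ring. }
    assert (Hadm : forall T, 0 <= T -> admissible mu T (fun _ => w) x0 y0).
    { intros T HT. apply adm_const. intros t Ht. eapply Rle_trans; [exact HV|]. apply Hgen; lra. }
    assert (Hval : sqrt ((x0 - s) ^ 2 + y0 ^ 2) + mu * s = V).
    { assert (E : sqrt ((x0 - s) ^ 2 + y0 ^ 2) = y0 / k).
    { assert (Hone : mu^2 + k*k = 1) by lra.
      assert (E1 : (x0 - s) ^ 2 + y0 ^ 2 = (y0/k)*(y0/k)).
      { transitivity ((mu^2 + k*k)*y0^2/(k*k)).
        - unfold s. field; lra.
        - rewrite Hone. field; lra. }
      rewrite E1. apply sqrt_square. apply Rmult_le_pos; [lra|left; apply Rinv_0_lt_compat; lra]. }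
    rewrite E. unfold V.
    replace (y0/k + mu*s) with (mu*x0 + y0*(1-mu^2)/k) by (unfold s; field; lra).
    rewrite <- Hk2. field; lra. }
    assert (Hlub : dfstar mu s x0 y0 = Finite V).
    { unfold dfstar. apply is_lub_Rbar_unique. split.
      - intros d [psi [Ha ->]]. simpl.
        eapply Rle_trans; [apply ub; eauto; lra|].
        rewrite Hval. right; reflexivity.
      - intros b Hb. apply Hb. exists (fun _ => w). split; [apply Hadm; lra|].
        apply Rle_antisym.
        + apply Hgen; lra.
        + eapply Rle_trans; [apply ub; [lra|lra|apply Hadm; lra]|].
          rewrite Hval; lra. }
    rewrite Hlub. split; [|reflexivity].
    intros T HT. eapply Rbar_le_trans; [|apply (dfstar_ge _ _ _ _ _ (Hadm T HT))]. simpl. apply Hgen; lra.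
  - destruct (Rlt_dec 0 0) as [h0|_]; [lra|].
    set (r := norm2 (x0, y0)).
    assert (Hrr : r*r = x0^2 + y0^2).
    { unfold r, norm2; cbn [fst snd]. apply sqrt_sqrt. pose proof (pow2_ge_0 x0); pose proof (pow2_ge_0 y0); lra. }
    assert (Hr1 : 1 < r) by exact Hx0.
    assert (Hxr : x0 <= mu * r).
    { destruct (Rle_or_lt x0 0) as [h|h]; [nra|].
      assert (h1 : x0 * k <= mu * y0).
      { assert (s * k <= 0) by (apply Rmult_le_0_r; lra).
        unfold s in H. replace ((x0 - mu / k * y0) * k) with (x0*k - mu*y0) in H by (field; lra). lra. }
      assert (h2 : (x0*k)*(x0*k) <= (mu*y0)*(mu*y0)) by (apply Rmult_le_compat; nra).
      assert (h3 : x0*x0 <= (mu*r)*(mu*r)).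
      { replace ((mu*r)*(mu*r)) with (mu^2*(r*r)) by ring. rewrite Hrr.
        replace ((x0*k)*(x0*k)) with (x0*x0*(k*k)) in h2 by ring. rewrite Hk2 in h2. nra. }
      destruct (Rle_or_lt x0 (mu*r)) as [h4|h4]; [exact h4|].
      assert ((mu*r)*(mu*r) < x0*x0) by (apply Rmult_le_0_lt_compat; nra). lra. }
    set (w := acos (x0 / r)).
    assert (Hxr1 : -1 <= x0/r <= 1).
    { assert (x0*x0 <= r*r) by nra.
      split.
      - apply (Rmult_le_reg_r r); [lra|]. field_simplify; [|lra]. nra.
      - apply (Rmult_le_reg_r r); [lra|]. field_simplify; [|lra]. nra. }
    assert (Hcw : cos w = x0/r) by (apply cos_acos; exact Hxr1).
    assert (Hsw : sin w = y0/r).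
    { unfold w. rewrite sin_acos by exact Hxr1.
      replace (1 - (x0/r)²) with ((y0/r)*(y0/r)).
      apply sqrt_square. apply Rmult_le_pos; [lra|left; apply Rinv_0_lt_compat; lra].
      unfold Rsqr. assert (Hy2 : y0^2 = r*r - x0^2) by lra.
      replace (y0/r*(y0/r)) with (y0^2/(r*r)) by (field; lra). rewrite Hy2. field; lra. }
    assert (Hgen : forall T, 0 <= T -> r <= norm2 (traj mu (fun _ => w) x0 y0 T)).
    { intros T HT. rewrite traj_const, Hcw, Hsw.
      eapply Rle_trans; [|apply (norm2_ge (x0/r) (y0/r))].
      - replace (x0 / r * (x0 - T + mu * (T * (x0 / r))) + y0 / r * (y0 + mu * (T * (y0 / r))))
          with ((x0^2+y0^2)/r + T*(mu*r - x0)/r + mu*T*((x0^2+y0^2)/(r*r) - 1)) by (field; lra).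
        rewrite <- Hrr. replace (r*r/(r*r) - 1) with 0 by (field; lra).
        replace (r*r/r) with r by (field; lra).
        assert (0 <= T*(mu*r-x0)/r).
        { apply Rmult_le_pos; [apply Rmult_le_pos; lra|left; apply Rinv_0_lt_compat; lra]. }
        lra.
      - transitivity ((x0^2+y0^2)/(r*r)); [field; lra|]. rewrite <- Hrr. field; lra. }
    assert (Hadm : forall T, 0 <= T -> admissible mu T (fun _ => w) x0 y0).
    { intros T HT. apply adm_const. intros t Ht. eapply Rle_trans; [left; exact Hr1|]. apply Hgen; lra. }
    assert (H0 : forall psi, norm2 (traj mu psi x0 y0 0) = r).
    { intro psi. unfold traj. rewrite !RInt_point. unfold zero; simpl. unfold r. f_equal. f_equal; ring. }
    assert (Hlub : dfstar mu 0 x0 y0 = Finite r).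
    { unfold dfstar. apply is_lub_Rbar_unique. split.
      - intros d [psi [Ha ->]]. rewrite H0. simpl; lra.
      - intros b Hb. apply Hb. exists (fun _ => w). split; [apply Hadm; lra|]. rewrite H0; reflexivity. }
    rewrite Hlub. split; [|reflexivity].
    intros T HT. eapply Rbar_le_trans; [|apply (dfstar_ge _ _ _ _ _ (Hadm T HT))]. simpl. apply Hgen; lra.
Qed.
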